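(* Let $K$ be a field in which $-1$ is not a square, $X$ an indeterminate, $D=K[X^2,X^3]_{(X^2,X^3)}$ (localization of $K[X^2,X^3]$ at its maximal ideal $(X^2,X^3)$), $V=K[X]_{(X^2+1)}$, and $R=D\cap V\subseteq K(X)$. Then $X^2+1$ is a prime element of $R$, $X^2$ and $X^3$ are irreducible in $R$, and $R$ is a one-dimensional Noetherian integral domain with exactly two maximal ideals, whose prime elements are exactly the associates of $X^2+1$, which has irreducible elements not associated to $X^2+1$, and none of those irreducible elements is absolutely irreducible.
   Context: Factorization notions for a domain refer to its monoid of non-zero elements. Two factorizations into irreducibles $a_1\cdots a_n=b_1\cdots b_m$ of the same element are essentially the same if $n=m$ and, after re-indexing, $a_j$ and $b_j$ are associated for all $j$. An irreducible $r$ is absolutely irreducible if for every $n\in\mathbb N$, every factorization of $r^n$ into irreducibles is essentially the same as $r^n=r\cdots r$. *)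

(* Defs.v *)
From HB Require Import structures.
From mathcomp Require Import all_boot all_order all_algebra.
From mathcomp Require Import fraction.
Set Implicit Arguments. Unset Strict Implicit. Unset Printing Implicit Defensive.
Import Order.TTheory GRing.Theory Num.Theory.
Local Open Scope ring_scope.

Section SubringNotions.
Variable F : fieldType.
Variable S : F -> Prop.

Definition is_subring : Prop :=
  [/\ S 1, (forall x y, S x -> S y -> S (x - y)) &
      (forall x y, S x -> S y -> S (x * y))].

Definition unitIn (u : F) : Prop := S u /\ exists v, S v /\ u * v = 1.
Definition dvdIn (a b : F) : Prop := exists c, S c /\ b = a * c.
Definition assocIn (a b : F) : Prop := exists u, unitIn u /\ b = a * u.

Definition irredIn (a : F) : Prop :=
  [/\ S a, a <> 0, ~ unitIn a &
      forall b c, S b -> S c -> a = b * c -> unitIn b \/ unitIn c].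

Definition primeIn (p : F) : Prop :=
  [/\ S p, p <> 0, ~ unitIn p &
      forall a b, S a -> S b -> dvdIn p (a * b) -> dvdIn p a \/ dvdIn p b].

Definition abs_irredIn (r : F) : Prop :=
  irredIn r /\
  forall (n : nat) (s : seq F), (forall a, a \in s -> irredIn a) ->
    \prod_(a <- s) a = r ^+ n ->
    size s = n /\ (forall a, a \in s -> assocIn r a).

Definition idealIn (I : F -> Prop) : Prop :=
  [/\ forall x, I x -> S x, I 0,
      (forall x y, I x -> I y -> I (x + y)) &
      (forall r x, S r -> I x -> I (r * x))].

Definition proper_idealIn (I : F -> Prop) : Prop := idealIn I /\ ~ I 1.

Definition set_eq (I J : F -> Prop) : Prop := forall x, I x <-> J x.
Definition set_sub (I J : F -> Prop) : Prop := forall x, I x -> J x.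
Definition set_ssub (I J : F -> Prop) : Prop := set_sub I J /\ ~ set_eq I J.

Definition prime_idealIn (P : F -> Prop) : Prop :=
  proper_idealIn P /\
  forall a b, S a -> S b -> P (a * b) -> P a \/ P b.

Definition maximal_idealIn (M : F -> Prop) : Prop :=
  proper_idealIn M /\
  forall J, proper_idealIn J -> set_sub M J -> set_eq J M.

Definition noetherianIn : Prop :=
  forall I, idealIn I ->
    exists g : seq F, (forall a, a \in g -> S a) /\
      forall x, I x <->
        exists c : 'I_(size g) -> F, (forall i, S (c i)) /\
          x = \sum_(i < size g) c i * g`_i.

Definition krull_dim_one : Prop :=
  (exists P0 P1, [/\ prime_idealIn P0, prime_idealIn P1 & set_ssub P0 P1]) /\
  ~ (exists P0 P1 P2, [/\ prime_idealIn P0, prime_idealIn P1, prime_idealIn P2,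
                        set_ssub P0 P1 & set_ssub P1 P2]).

Definition exactly_two_maximal : Prop :=
  exists M1 M2, [/\ maximal_idealIn M1, maximal_idealIn M2, ~ set_eq M1 M2 &
    forall M, maximal_idealIn M -> set_eq M M1 \/ set_eq M M2].

End SubringNotions.

Notation tofrac := (@FracField.tofrac _).
Notation "x %:F" := (@FracField.tofrac _ x) : ring_scope.

Section Rings.
Variable K : fieldType.
Local Notation KX := {fraction {poly K}}.

Definition inV (x : KX) : Prop :=
  exists f g : {poly K}, ~~ (('X^2 + 1) %| g) /\ x = f%:F / g%:F.

(* D = K[X^2,X^3]_(X^2,X^3): K[X^2,X^3] = polynomials with zero coefficient
   of X; its maximal ideal (X^2,X^3) = those with zero constant term. *)
Definition inD (x : KX) : Prop :=
  exists f g : {poly K}, [/\ f`_1 = 0, g`_1 = 0, g`_0 != 0 & x = f%:F / g%:F].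

Definition inR (x : KX) : Prop := inD x /\ inV x.
End Rings.

(* Main.v *)
Require Import Defs.
From mathcomp Require Import all_boot all_order all_algebra.
From mathcomp Require Import fraction ring zify.
From Stdlib Require Import Classical.
Import GRing.Theory.
Local Open Scope ring_scope.

Section Main.
Variable K : fieldType.
Hypothesis hK : forall a : K, a ^+ 2 != -1.
Local Notation KX := {fraction {poly K}}.
Local Notation P := ('X^2 + 1 : {poly K}).

Lemma sizeP : size P = 3%N.
Proof. by rewrite -[1]/(1%:P) size_XnaddC. Qed.

Lemma P_neq0 : P != 0.
Proof. by rewrite -size_poly_eq0 sizeP. Qed.

Lemma P_irr : irreducible_poly P.
Proof.
apply: cubic_irreducible; first by rewrite sizeP.
move=> x; rewrite /root !hornerE; apply/negP=> /eqP h.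
by move: (hK x); rewrite -(subr0 (x ^+ 2)) -h opprD addrA subrr add0r eqxx.
Qed.

Lemma P_prime (a b : {poly K}) : P %| a * b -> (P %| a) || (P %| b).
Proof.
move=> hab; case: (boolP (coprimep P a)) => ca.
  by rewrite -(Gauss_dvdpr b ca) hab orbT.
have : gcdp P a %= P.
  have [_ h] := P_irr; apply: h; last exact: dvdp_gcdl.
  by rewrite -coprimep_def.
by move/eqp_dvdl => <-; rewrite dvdp_gcdr.
Qed.

Lemma P_ndvd_small (q : {poly K}) : q != 0 -> (size q <= 2)%N -> ~~ (P %| q).
Proof.
move=> q0 sq; apply/negP=> /(dvdp_leq q0); rewrite sizeP => h.
by move: (leq_trans h sq).
Qed.

Lemma P_ndvd_Xn n : ~~ (P %| 'X^n).
Proof.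
elim: n => [|n IH]; first by apply: P_ndvd_small; rewrite ?oner_eq0 ?size_poly1.
rewrite [X in _ %| X]exprS; apply/negP=> h; have /orP[h1|h1] := P_prime _ _ h; last by rewrite h1 in IH.
by move: h1; apply/negP; apply: P_ndvd_small; rewrite ?polyX_eq0 ?size_polyX.
Qed.

Lemma P_ndvdM (a b : {poly K}) : ~~ (P %| a) -> ~~ (P %| b) -> ~~ (P %| a * b).
Proof. by move=> ha hb; apply/negP=> h; have := P_prime _ _ h; rewrite (negbTE ha) (negbTE hb). Qed.


Lemma coef1M (f g : {poly K}) : (f * g)`_1 = f`_0 * g`_1 + f`_1 * g`_0.
Proof. by rewrite coefM !big_ord_recl big_ord0 addr0. Qed.

Definition A (f : {poly K}) := f`_1 = 0.
Definition Sd (g : {poly K}) := [/\ g`_1 = 0, g`_0 != 0 & ~~ (P %| g)].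

Lemma A_mul f g : A f -> A g -> A (f * g).
Proof. by rewrite /A coef1M => -> ->; rewrite !mul0r mulr0 addr0. Qed.
Lemma A_add f g : A f -> A g -> A (f + g).
Proof. by rewrite /A coefD => -> ->; rewrite addr0. Qed.
Lemma A_opp f : A f -> A (- f).
Proof. by rewrite /A coefN => ->; rewrite oppr0. Qed.
Lemma A_sub f g : A f -> A g -> A (f - g).
Proof. by move=> hf hg; apply: A_add => //; apply: A_opp. Qed.
Lemma A_C c : A c%:P.
Proof. by rewrite /A coefC. Qed.
Lemma A_Xn n : n != 1%N -> A 'X^n.
Proof. by rewrite /A coefXn eq_sym => /negbTE ->. Qed.
Lemma A_0 : A 0. Proof. by rewrite /A coef0. Qed.
Lemma A_1 : A 1. Proof. by rewrite /A coef1. Qed.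

Lemma Sd_A g : Sd g -> A g. Proof. by case. Qed.
Lemma Sd_neq0 g : Sd g -> g != 0.
Proof. by case=> _ h _; apply: contraNneq h => ->; rewrite coef0. Qed.
Lemma Sd_mul g h : Sd g -> Sd h -> Sd (g * h).
Proof.
case=> g1 g0 gP [h1 h0 hP]; split.
- exact: A_mul.
- by rewrite coef0M mulf_neq0.
- exact: P_ndvdM.
Qed.
Arguments Sd_A {g}. Arguments Sd_neq0 {g}. Arguments Sd_mul {g h}.
Lemma Sd_1 : Sd 1.
Proof.
split; [exact: A_1| by rewrite coef1 oner_eq0 |].
by apply: P_ndvd_small; rewrite ?oner_eq0 ?size_poly1.
Qed.

Lemma frac_eq (f g f' g' : {poly K}) : g != 0 -> g' != 0 ->
  (f%:F / g%:F = f'%:F / g'%:F :> KX) <-> f * g' = f' * g.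
Proof.
move=> hg hg'; split=> [/eqP|h].
  by rewrite eqr_div ?tofrac_eq0 // -!tofracM tofrac_eq => /eqP.
by apply/eqP; rewrite eqr_div ?tofrac_eq0 // -!tofracM h.
Qed.

Definition rep (x : KX) f g := [/\ A f, Sd g & x = f%:F / g%:F].

Lemma A_cross f g f' g' : f * g = f' * g' -> A f' -> g`_1 = 0 -> g`_0 != 0 ->
  g'`_1 = 0 -> A f.
Proof.
move=> e hf' g1 g0 g'1; move: (congr1 (fun p : {poly K} => p`_1) e).
rewrite /= !coef1M g1 g'1 hf' !mulr0 !mul0r !add0r => /eqP.
by rewrite mulf_eq0 (negbTE g0) orbF => /eqP.
Qed.

Lemma fix_den (f h : {poly K}) : h`_0 != 0 -> ~~ (P %| h) ->
  let l := (h`_0)%:P - (h`_1)%:P * 'X in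
  [/\ Sd (h * l), l != 0 & (f * l)%:F / (h * l)%:F = f%:F / h%:F :> KX].
Proof.
move=> h0 hP l.
have l0 : l`_0 = h`_0 by rewrite /l coefB coefC coefCM coefX mulr0 subr0.
have l1 : l`_1 = - h`_1 by rewrite /l coefB coefC coefCM coefX mulr1 sub0r.
have ln0 : l != 0 by apply: contraNneq h0 => e; rewrite -l0 e coef0.
have hn0 : h != 0 by apply: contraNneq h0 => ->; rewrite coef0.
split=> //.
- split.
  + by rewrite /A coef1M l1 l0 mulrN [X in _ + X]mulrC addNr.
  + by rewrite coef0M l0 mulf_neq0.
  + apply: P_ndvdM => //; apply: P_ndvd_small => //.
    rewrite /l (leq_trans (size_add _ _)) // size_opp geq_max.
    apply/andP; split; first exact: (leq_trans (size_polyC_leq1 _)).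
    rewrite (leq_trans (size_mul_leq _ _)) // size_polyX.
    by have := size_polyC_leq1 h`_1; case: (size _) => [|[]].
- by apply/frac_eq; rewrite ?mulf_neq0 //; rewrite mulrAC mulrA.
Qed.

Lemma P0 : P`_0 = 1.
Proof. by rewrite coefD coefXn coef1 add0r. Qed.

Lemma remove_P n (f1 g1 f2 g2 : {poly K}) : (size g1 <= n)%N -> g1`_0 != 0 ->
  ~~ (P %| g2) -> f1 * g2 = f2 * g1 ->
  exists f h : {poly K}, [/\ h`_0 != 0, ~~ (P %| h) & f * g1 = f1 * h].
Proof.
elim: n f1 g1 => [|n IH] f1 g1 sg g0 g2P e.
  by move: sg; rewrite leqn0 size_poly_eq0 => /eqP h; rewrite h coef0 eqxx in g0.
case: (boolP (P %| g1)) => g1P; last by exists f1, g1.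
have eg := divpK g1P; set q := g1 %/ P in eg.
have q0 : q`_0 != 0 by move: g0; rewrite -eg coef0M P0 mulr1.
have : P %| f1 * g2 by rewrite e -eg mulrA dvdp_mull.
move/P_prime; rewrite (negbTE g2P) orbF => f1P.
have ef := divpK f1P; set f1' := f1 %/ P in ef.
have e' : f1' * g2 = f2 * q.
  apply: (mulIf P_neq0); by rewrite mulrAC ef e -eg mulrA.
have qn0 : q != 0 by apply: contraNneq q0 => ->; rewrite coef0.
have sq : (size q <= n)%N.
  move: sg; rewrite -eg size_mul // ?P_neq0 // sizeP addnS /= addn2 /= ltnS => h.
  by apply: leq_trans h; rewrite ltnW.
have [f [h [h0 hP e2]]] := IH f1' q sq q0 g2P e'.
exists f, h; split=> //.
by rewrite -eg mulrA e2 -ef mulrAC.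
Qed.

Lemma R_rep (x : KX) : inR x <-> exists f g, rep x f g.
Proof.
split; last first.
  case=> f [g [hf [g1 g0 gP] ->]]; split.
    by exists f, g.
  by exists f, g.
case=> [[f1 [g1 [f11 g11 g10 e1]]] [f2 [g2 [g2P e2]]]].
have g1n0 : g1 != 0 by apply: contraNneq g10 => ->; rewrite coef0.
have g2n0 : g2 != 0 by apply: contraNneq g2P => ->; rewrite dvdp0.
have e : f1 * g2 = f2 * g1 by apply/frac_eq => //; rewrite -e1 -e2.
have [f [h [h0 hP e3]]] := remove_P _ _ _ _ _ (leqnn _) g10 g2P e.
have [Sdl ln0 el] := fix_den f h h0 hP.
set l := _ - _ in Sdl ln0 el.
have hn0 : h != 0 by apply: contraNneq h0 => ->; rewrite coef0.
exists (f * l), (h * l); split => //; last by rewrite el e1; apply/frac_eq.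
apply: (@A_cross _ g1 f1 (h * l)) => //; last by case: Sdl.
by rewrite mulrAC e3 mulrA.
Qed.


Local Notation R := (@inR K).
Local Notation p := (P%:F : KX).

Lemma P1 : P`_1 = 0.
Proof. by rewrite coefD coefXn coef1 add0r. Qed.

Lemma Fn0 (g : {poly K}) : g != 0 -> g%:F != 0 :> KX.
Proof. by rewrite tofrac_eq0. Qed.

Arguments Fn0 {g}.
Lemma Sd_F g : Sd g -> g%:F != 0 :> KX.
Proof. by move/Sd_neq0/Fn0. Qed.

Arguments Sd_F {g}.
Lemma R_frac {f g} : A f -> Sd g -> R (f%:F / g%:F).
Proof. by move=> hf hg; apply/R_rep; exists f, g. Qed.

Lemma rep_poly {f} : A f -> rep f%:F f 1.
Proof. by move=> hf; split=> //; [exact: Sd_1| by rewrite tofrac1 divr1]. Qed.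

Lemma R_poly {f} : A f -> R f%:F.
Proof. by move=> hf; apply/R_rep; exists f, 1; apply: rep_poly. Qed.

Lemma R_1 : R 1. Proof. by rewrite -tofrac1; apply: R_poly; apply: A_1. Qed.
Lemma R_0 : R 0. Proof. by rewrite -tofrac0; apply: R_poly; apply: A_0. Qed.

Lemma rep_mul {x y f g f' g'} : rep x f g -> rep y f' g' -> rep (x * y) (f * f') (g * g').
Proof.
case=> hf hg -> [hf' hg' ->]; split; [exact: A_mul|exact: Sd_mul|].
by rewrite !tofracM mulf_div.
Qed.

Lemma rep_add {x y f g f' g'} : rep x f g -> rep y f' g' ->
  rep (x + y) (f * g' + f' * g) (g * g').
Proof.
move=> [hf hg ->] [hf' hg' ->]; split.
- by apply: A_add; apply: A_mul => //; apply: Sd_A.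
- exact: Sd_mul.
- have := Sd_F hg; have := Sd_F hg' => h1 h2.
  rewrite (addf_div _ _ h2 h1); congr (_ / _).
    by rewrite tofracD !tofracM.
  by rewrite tofracM.
Qed.

Lemma rep_opp {x f g} : rep x f g -> rep (- x) (- f) g.
Proof. by move=> [hf hg ->]; split => //; [exact: A_opp | by rewrite tofracN mulNr]. Qed.

Lemma R_mul {x y} : R x -> R y -> R (x * y).
Proof.
move=> /R_rep [f [g h]] /R_rep [f' [g' h']]; apply/R_rep.
by exists (f * f'), (g * g'); apply: rep_mul.
Qed.

Lemma R_add {x y} : R x -> R y -> R (x + y).
Proof.
move=> /R_rep [f [g h]] /R_rep [f' [g' h']]; apply/R_rep.
by exists (f * g' + f' * g), (g * g'); apply: rep_add.
Qed.

Lemma R_opp {x} : R x -> R (- x).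
Proof. by move=> /R_rep [f [g h]]; apply/R_rep; exists (- f), g; apply: rep_opp. Qed.

Lemma R_sub {x y} : R x -> R y -> R (x - y).
Proof. by move=> hx hy; apply: R_add => //; apply: R_opp. Qed.

Lemma R_subring : is_subring R.
Proof. by split; [exact: R_1|move=> x y; exact: R_sub|move=> x y; exact: R_mul]. Qed.

Lemma rep_cross {x f g f' g'} : rep x f g -> rep x f' g' -> f * g' = f' * g.
Proof.
move=> [_ hg e] [_ hg' e']; apply/frac_eq; [exact: Sd_neq0|exact: Sd_neq0|].
by rewrite -e -e'.
Qed.

Lemma unit_rep {x f g} : rep x f g -> (unitIn R x <-> f`_0 != 0 /\ ~~ (P %| f)).
Proof.
move=> hx; have [hf hg ex] := hx; split.
  case=> _ [v [/R_rep [f' [g' hv]] e]].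
  have [hf' hg' ev] := hv.
  have e2 : f * f' = g * g'.
    have h := frac_eq (f * f') (g * g') 1 1 (Sd_neq0 (Sd_mul hg hg')) (oner_neq0 _).
    rewrite mulr1 mul1r in h; apply: h.1.
    by rewrite !tofracM -mulf_div -ex -ev e tofrac1 divr1.
  have hgg := Sd_mul hg hg'; case: hgg => _ h0 hP; split.
    by apply: contraNneq h0; rewrite -e2 coef0M => ->; rewrite mul0r.
  by apply: contraNN hP; rewrite -e2; apply: dvdp_mulr.
case=> f0 fP; split; first by apply/R_rep; exists f, g.
have hfn : f != 0 by apply: contraNneq f0 => ->; rewrite coef0.
exists (g%:F / f%:F); split; first by apply: R_frac => //; apply: Sd_A.
rewrite ex mulf_div [g%:F * _]mulrC divff // mulf_neq0 //; [exact: Fn0 | exact: Sd_F].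
Qed.

Definition Mp (x : KX) := exists z, R z /\ x = p * z.
Definition M0 (x : KX) := R x /\ exists f g, rep x f g /\ f`_0 = 0.

Lemma A_divP f : A f -> P %| f -> A (f %/ P).
Proof.
move=> hf fP; move: hf; rewrite /A -{1}(divpK fP) coef1M P1 P0 mulr0 add0r mulr1.
by [].
Qed.

Lemma A_P : A P. Proof. exact: P1. Qed.

Lemma Mp_rep {x f g} : rep x f g -> (Mp x <-> P %| f).
Proof.
move=> hx; have [hf hg ex] := hx; split.
  case=> z [/R_rep [f' [g' hz]] ez].
  have hpz : rep (p * z) (P * f') (1 * g') by apply: rep_mul => //; apply: rep_poly; apply: A_P.
  rewrite -ez in hpz; have := rep_cross hx hpz; rewrite mul1r => e.
  have : P %| f * g' by rewrite e -mulrA dvdp_mulr.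
  by move/P_prime; case: hz => _ [_ _ /negbTE ->]; rewrite orbF.
move=> fP; exists ((f %/ P)%:F / g%:F); split; first by apply: R_frac => //; apply: A_divP.
by rewrite ex -{1}(divpK fP) tofracM mulrA [_ * p]mulrC.
Qed.

Lemma M0_rep {x f g} : rep x f g -> (M0 x <-> f`_0 = 0).
Proof.
move=> hx; have [hf hg ex] := hx; split.
  case=> _ [f' [g' [hx' f0]]]; have := rep_cross hx hx'.
  move/(congr1 (fun q : {poly K} => q`_0)); rewrite !coef0M f0 mul0r => /eqP.
  by case: hx' => _ [_ /negbTE g0 _] _; rewrite mulf_eq0 g0 orbF => /eqP.
by move=> f0; split; [apply/R_rep; exists f, g | exists f, g].
Qed.

Lemma trich {x} : R x -> [\/ M0 x, Mp x | unitIn R x].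
Proof.
move=> /R_rep [f [g hx]].
case: (eqVneq f`_0 0) => f0; first by constructor 1; apply/(M0_rep hx).
case: (boolP (P %| f)) => fP; first by constructor 2; apply/(Mp_rep hx).
by constructor 3; apply/(unit_rep hx).
Qed.

Lemma unit_notM0 {x} : unitIn R x -> ~ M0 x.
Proof.
move=> hu; have [/R_rep [f [g hx]] _] := hu.
by move/(M0_rep hx); have [/eqP] := (unit_rep hx).1 hu.
Qed.

Lemma unit_notMp {x} : unitIn R x -> ~ Mp x.
Proof.
move=> hu; have [/R_rep [f [g hx]] _] := hu.
by move/(Mp_rep hx) => h; have [_ /negP] := (unit_rep hx).1 hu.
Qed.

Lemma rep_0 : rep 0 0 1.
Proof. by rewrite -{1}tofrac0; apply: rep_poly; apply: A_0. Qed.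
Lemma rep_1 : rep 1 1 1.
Proof. by rewrite -{1}tofrac1; apply: rep_poly; apply: A_1. Qed.

Lemma R_p : R p. Proof. exact/R_poly/A_P. Qed.

Lemma M0_ideal : idealIn R M0.
Proof.
split.
- by move=> x [].
- by apply/(M0_rep rep_0); rewrite coef0.
- move=> x y [hx [f [g [rx f0]]]] [hy [f' [g' [ry f'0]]]].
  apply/(M0_rep (rep_add rx ry)); by rewrite coefD !coef0M f0 f'0 !mul0r addr0.
- move=> r x /R_rep [f [g rr]] [hx [f' [g' [rx f'0]]]].
  by apply/(M0_rep (rep_mul rr rx)); rewrite coef0M f'0 mulr0.
Qed.

Lemma Mp_ideal : idealIn R Mp.
Proof.
split.
- by move=> x [z [hz ->]]; apply: R_mul => //; exact: R_p.
- by exists 0; rewrite mulr0; split => //; exact: R_0.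
- move=> x y [z [hz ->]] [z' [hz' ->]]; exists (z + z'); rewrite mulrDr.
  by split => //; apply: R_add.
- move=> r x hr [z [hz ->]]; exists (r * z); rewrite mulrCA; split => //.
  exact: R_mul.
Qed.

Lemma M0_n1 : ~ M0 1.
Proof. by move/(M0_rep rep_1)/eqP; rewrite coef1 oner_eq0. Qed.

Lemma Mp_n1 : ~ Mp 1.
Proof.
move/(Mp_rep rep_1) => h; move: h; apply/negP; apply: P_ndvd_small.
  by rewrite oner_eq0.
by rewrite size_poly1.
Qed.

Lemma M0_prime : prime_idealIn R M0.
Proof.
split; first by split; [exact: M0_ideal | exact: M0_n1].
move=> a b /R_rep [f [g ra]] /R_rep [f' [g' rb]].
move/(M0_rep (rep_mul ra rb)); rewrite coef0M => /eqP; rewrite mulf_eq0.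
by case/orP => /eqP h; [left; apply/(M0_rep ra) | right; apply/(M0_rep rb)].
Qed.

Lemma Mp_prime : prime_idealIn R Mp.
Proof.
split; first by split; [exact: Mp_ideal | exact: Mp_n1].
move=> a b /R_rep [f [g ra]] /R_rep [f' [g' rb]].
move/(Mp_rep (rep_mul ra rb))/P_prime.
by case/orP => h; [left; apply/(Mp_rep ra) | right; apply/(Mp_rep rb)].
Qed.

Definition Z0 (x : KX) := x = 0.

Lemma Z0_prime : prime_idealIn R Z0.
Proof.
split.
  split; last by move=> /eqP; rewrite oner_eq0.
  split; rewrite /Z0.
  - by move=> x ->; exact: R_0.
  - by [].
  - by move=> x y -> ->; rewrite addr0.
  - by move=> r x _ ->; rewrite mulr0.
move=> a b _ _ /eqP; rewrite /Z0 mulf_eq0 => /orP [] /eqP; by [left|right].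
Qed.

Lemma ideal_opp {I x} : idealIn R I -> I x -> I (- x).
Proof.
case=> _ _ _ hm hx; rewrite -mulN1r; apply: hm => //; apply: R_opp; exact: R_1.
Qed.

Lemma ideal_sub {I x y} : idealIn R I -> I x -> I y -> I (x - y).
Proof. move=> hI hx hy; have [_ _ ha _] := hI; apply: ha => //; exact: ideal_opp. Qed.

Lemma ideal_unit {I u} : idealIn R I -> I u -> unitIn R u -> I 1.
Proof.
move=> [_ _ _ hm] hu [_ [v [hv e]]]; rewrite -e mulrC; exact: hm.
Qed.

Lemma sum_unit {a b} : R a -> R b -> ~ M0 a -> M0 b -> Mp a -> ~ Mp b -> unitIn R (a + b).
Proof.
move=> ha hb na mb pa nb; have hab := R_add ha hb.
have [h|h|//] := trich hab.
  by case: na; rewrite -(addrK b a); apply: ideal_sub => //; exact: M0_ideal.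
by case: nb; rewrite -(addKr a b); rewrite addrC; apply: ideal_sub => //; exact: Mp_ideal.
Qed.


Lemma rep_Xn {n} : n != 1%N -> rep ('X^n)%:F 'X^n 1.
Proof. by move=> h; apply: rep_poly; apply: A_Xn. Qed.

Lemma R_Xn {n} : n != 1%N -> R ('X^n)%:F.
Proof. by move=> h; apply: R_poly; apply: A_Xn. Qed.

Lemma M0_Xn {n} : n != 1%N -> n != 0%N -> M0 ('X^n)%:F.
Proof. by move=> h h0; apply/(M0_rep (rep_Xn h)); rewrite coefXn eq_sym (negbTE h0). Qed.

Lemma Mp_Xn {n} : n != 1%N -> ~ Mp ('X^n)%:F.
Proof. by move=> h /(Mp_rep (rep_Xn h)); apply/negP; apply: P_ndvd_Xn. Qed.

Lemma M0_p : ~ M0 p.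
Proof. by move/(M0_rep (rep_poly A_P)); rewrite P0; apply/eqP; rewrite oner_eq0. Qed.

Lemma Mp_p : Mp p.
Proof. by exists 1; rewrite mulr1; split => //; exact: R_1. Qed.

Lemma proper_dich {I} : proper_idealIn R I -> set_sub I M0 \/ set_sub I Mp.
Proof.
move=> [hI n1]; case: (classic (set_sub I M0)) => h; [by left|right].
move=> b hb; apply: NNPP => nb; apply: h => a ha; apply: NNPP => na.
have [hIR _ hadd _] := hI.
have pa : Mp a.
  have [//|//|u] := trich (hIR _ ha); by case: n1; apply: (ideal_unit hI ha).
have mb : M0 b.
  have [//|//|u] := trich (hIR _ hb); by case: n1; apply: (ideal_unit hI hb).
by case: n1; apply: (ideal_unit hI (hadd _ _ ha hb)); apply: sum_unit => //; apply: hIR.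
Qed.

Lemma M0_max : maximal_idealIn R M0.
Proof.
split; first by split; [exact: M0_ideal | exact: M0_n1].
move=> J [hJ n1] sub x; split; last exact: sub.
move=> hx; apply: NNPP => nx; have [hJR _ hadd _] := hJ.
have [//|px|u] := trich (hJR _ hx); last by case: n1; apply: (ideal_unit hJ hx).
have h2 : (2 != 1)%N by []. 
have m2 : M0 ('X^2)%:F by apply: M0_Xn.
have j2 := sub _ m2.
have j3 := hadd _ _ hx j2.
case: n1; apply: (ideal_unit hJ j3).
by apply: sum_unit => //; [exact: hJR | exact: R_Xn | exact: Mp_Xn].
Qed.

Lemma Mp_max : maximal_idealIn R Mp.
Proof.
split; first by split; [exact: Mp_ideal | exact: Mp_n1].
move=> J [hJ n1] sub x; split; last exact: sub.
move=> hx; apply: NNPP => nx; have [hJR _ hadd _] := hJ.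
have [mx|//|u] := trich (hJR _ hx); last by case: n1; apply: (ideal_unit hJ hx).
case: n1; apply: (ideal_unit hJ (hadd _ _ (sub _ Mp_p) hx)).
apply: sum_unit => //; [exact: R_p | exact: hJR | exact: M0_p | exact: Mp_p].
Qed.

Lemma two_max : exactly_two_maximal R.
Proof.
exists M0, Mp; split; [exact: M0_max | exact: Mp_max | |].
  have h2 : (2 != 1)%N by [].
  by move=> /(_ ('X^2)%:F) [h _]; exact: (Mp_Xn h2 (h (M0_Xn h2 isT))).
move=> M hM; have [[hI n1] hmax] := hM.
have [h|h] := proper_dich (conj hI n1).
  left; move=> x; split; [exact: h|].
  by have := hmax M0 (conj M0_ideal M0_n1) h x; case.
right; move=> x; split; [exact: h|].
by have := hmax Mp (conj Mp_ideal Mp_n1) h x; case.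
Qed.


Lemma decomp {f : {poly K}} : f != 0 ->
  exists b k, [/\ f = 'X^b * k, k`_0 != 0 & forall i, (i < b)%N -> f`_i = 0].
Proof.
move=> fn0.
have ex : exists i, f`_i != 0.
  by exists (size f).-1; rewrite -lead_coefE lead_coef_eq0.
case: (ex_minnP ex) => b fb bmin.
have fz : forall i, (i < b)%N -> f`_i = 0.
  move=> i ib; apply/eqP; apply: contraTT ib => h; rewrite -leqNgt; exact: bmin.
exists b, (drop_poly b f); split => //; last by rewrite coef_drop_poly add0n.
have tk : take_poly b f = 0.
  apply/polyP=> i; rewrite coef_take_poly coef0; case: ifP => // ib; exact: fz.
by rewrite -{1}(poly_take_drop b f) tk add0r mulrC.
Qed.

Definition lfix (h : {poly K}) := (h`_0)%:P - (h`_1)%:P * 'X.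

Lemma lfix_prop {h : {poly K}} : h`_0 != 0 ->
  [/\ A (h * lfix h), (h * lfix h)`_0 != 0 & A ('X^2 * lfix h)].
Proof.
move=> h0.
have l0 : (lfix h)`_0 = h`_0 by rewrite /lfix coefB coefC coefCM coefX mulr0 subr0.
have l1 : (lfix h)`_1 = - h`_1 by rewrite /lfix coefB coefC coefCM coefX mulr1 sub0r.
split.
- by rewrite /A coef1M l1 l0 mulrN [X in _ + X]mulrC addNr.
- by rewrite coef0M l0 mulf_neq0.
- by rewrite /A coefXnM.
Qed.

Lemma Xpow {Q : KX -> Prop} : prime_idealIn R Q ->
  forall m, (2 <= m)%N -> Q ('X^m)%:F -> Q ('X^2)%:F /\ Q ('X^3)%:F.
Proof.
move=> [[hQ _] hpr]; have [_ _ _ hmul] := hQ.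
have RX : forall n, (2 <= n)%N -> R ('X^n)%:F.
  by move=> n hn; apply: R_Xn; apply/eqP => e; rewrite e in hn.
have e6a : ('X^4 * 'X^2 : {poly K}) = 'X^3 * 'X^3 by rewrite -!exprD.
have e6b : ('X^3 * 'X^3 : {poly K}) = 'X^2 * 'X^4 by rewrite -!exprD.
have e4 : ('X^4 : {poly K}) = 'X^2 * 'X^2 by rewrite -!exprD.
have h23 : Q ('X^2)%:F \/ Q ('X^3)%:F -> Q ('X^2)%:F /\ Q ('X^3)%:F.
  case=> h.
    split => //; have : Q ('X^4 * 'X^2)%:F by rewrite tofracM; apply: hmul => //; apply: RX.
    rewrite e6a tofracM => h'.
    by have [] := hpr _ _ (RX 3 isT) (RX 3 isT) h'.
  split => //; have : Q ('X^3 * 'X^3)%:F by rewrite tofracM; apply: hmul => //; apply: RX.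
  rewrite e6b tofracM => h'.
  have [//|] := hpr _ _ (RX 2 isT) (RX 4 isT) h'.
  rewrite e4 tofracM => h''.
  by have [] := hpr _ _ (RX 2 isT) (RX 2 isT) h''.
have main : forall n m, (m <= n)%N -> (2 <= m)%N -> Q ('X^m)%:F ->
    Q ('X^2)%:F \/ Q ('X^3)%:F.
  elim=> [|n IH] m hmn h2m hQm; first by case: m hmn h2m hQm.
  case: (ltnP m 4) => hm4.
    have : (m == 2) || (m == 3) by lia.
    by case/orP => /eqP e; rewrite e in hQm; [left|right].
  have e : 'X^m = 'X^2 * 'X^(m - 2) :> {poly K} by rewrite -exprD subnKC // ltnW.
  move: hQm; rewrite e tofracM => hQm.
  have hm2 : (1 < m - 2)%N by lia.
  have [|h] := hpr _ _ (RX 2 isT) (RX (m - 2)%N hm2) hQm; first by left.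
  by apply: (IH (m - 2)%N) => //; lia.
by move=> m h2 hm; apply: h23; exact: (main m m (leqnn m) h2 hm).
Qed.


Lemma M0_gen {Q : KX -> Prop} : idealIn R Q -> Q ('X^2)%:F -> Q ('X^3)%:F ->
  forall x, M0 x -> Q x.
Proof.
move=> hQ h2 h3 x [hx [f [g [[hf hg ex] f0]]]].
have [_ _ hadd hmul] := hQ.
set c := f`_3; set f' := f - c%:P * 'X^3.
have tk : take_poly 2 f' = 0.
  apply/polyP => i; rewrite coef_take_poly coef0; case: ifP => // hi.
  rewrite /f' coefB coefCM coefXn.
  by case: i hi => [|[|]] //= _; rewrite mulr0 subr0.
set e := drop_poly 2 f'.
have ef : f = e * 'X^2 + c%:P * 'X^3.
  have := poly_take_drop 2 f'; rewrite tk add0r /e => ->.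
  by rewrite /f' subrK.
have Ae : A e by rewrite /A /e coef_drop_poly /f' coefB coefCM coefXn /= mulr1 subrr.
have -> : x = (e%:F / g%:F) * ('X^2)%:F + ((c%:P)%:F / g%:F) * ('X^3)%:F.
  rewrite ex ef tofracD !tofracM; ring.
apply: hadd; apply: hmul => //; apply: R_frac => //; exact: A_C.
Qed.

Lemma p_in_Q {Q : KX -> Prop} : prime_idealIn R Q -> set_sub Q Mp ->
  forall n (f : {poly K}), (size f <= n)%N -> A f -> f != 0 -> Q f%:F -> Q p.
Proof.
move=> [[hQ _] hpr] sub; elim=> [|n IH] f sf hf fn0 hQf.
  by move: sf; rewrite leqn0 size_poly_eq0 (negbTE fn0).
have fP : P %| f by apply/(Mp_rep (rep_poly hf)); apply: sub.
have ef := divpK fP; set q := f %/ P in ef.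
have Aq : A q by apply: A_divP.
have qn0 : q != 0 by apply: contraNneq fn0 => e; rewrite -ef e mul0r.
move: hQf; rewrite -ef tofracM => hQf.
have [hq|//] := hpr _ _ (R_poly Aq) R_p hQf.
apply: (IH q) => //; move: sf; rewrite -ef size_mul // ?P_neq0 // sizeP.
by rewrite addnS /= addn2 /= ltnS => h; apply: leq_trans h; rewrite ltnW.
Qed.

Lemma prime_class {Q : KX -> Prop} : prime_idealIn R Q ->
  [\/ set_eq Q Z0, set_eq Q M0 | set_eq Q Mp].
Proof.
move=> HQ; have [[hQ n1] hpr] := HQ; have [hQR hQ0 hadd hmul] := hQ.
case: (classic (exists y, Q y /\ y != 0)) => [[y [hy y0]] | hno]; last first.
  constructor 1 => x; split; last by move=> ->.
  by move=> hx; apply: NNPP => nx; apply: hno; exists x; split => //; apply/eqP.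
have [f [g ry]] := (R_rep y).1 (hQR _ hy); have [hf hg ey] := ry.
have Qf : Q f%:F.
  have -> : f%:F = g%:F * y by rewrite ey mulrC (divfK (Sd_F hg)).
  by apply: hmul => //; apply: R_poly; apply: Sd_A.
have fn0 : f != 0 by apply: contraNneq y0 => e; rewrite ey e tofrac0 mul0r.
have [sub|sub] := proper_dich (conj hQ n1).
  constructor 2 => x; split; first exact: sub.
  have [b [k [ef k0 _]]] := decomp fn0.
  have [Akl kl0 AX2l] := lfix_prop k0.
  have : Q ('X^2 * lfix k * f)%:F.
    by rewrite tofracM; apply: hmul => //; apply: R_poly.
  have -> : 'X^2 * lfix k * f = 'X^(b + 2) * (k * lfix k).
    by rewrite ef exprD; ring.
  rewrite tofracM => hQ2.
  have hb : (b + 2 != 1)%N by rewrite addn2.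
  have [hX|hk] := hpr _ _ (R_Xn hb) (R_poly Akl) hQ2.
    have [h2 h3] := Xpow HQ (b + 2) (leq_addl _ _) hX.
    exact: (M0_gen hQ h2 h3).
  by have /(M0_rep (rep_poly Akl))/eqP := sub _ hk; rewrite (negbTE kl0).
constructor 3 => x; split; first exact: sub.
have hp := p_in_Q HQ sub _ f (leqnn _) hf fn0 Qf.
by case=> z [hz ->]; rewrite mulrC; apply: hmul.
Qed.

Lemma krull : krull_dim_one R.
Proof.
split.
  exists Z0, M0; split; [exact: Z0_prime | exact: M0_prime |].
  split; first by move=> x ->; have [[[]]] := M0_prime.
  have h2 : (2 != 1)%N by [].
  move=> /(_ ('X^2)%:F) [_ /(_ (M0_Xn h2 isT))]; rewrite /Z0 => /eqP.
  by rewrite tofrac_eq0 -size_poly_eq0 size_polyXn.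
case=> P0 [P1 [P2 [h0 h1 h2 [s01 n01] [s12 n12]]]].
have nz : forall Q, prime_idealIn R Q -> set_ssub P0 Q -> ~ set_eq Q Z0.
  move=> Q _ [sQ nQ] eQ; apply: nQ => x; split; first exact: sQ.
  move=> /eQ ->; by have [[[_ ]]] := h0.
have n2 : ~ M0 ('X^2)%:F -> False by apply; apply: M0_Xn.
have np : ~ M0 p := M0_p.
have c1 := prime_class h1; have c2 := prime_class h2.
have s02 : set_ssub P0 P2.
  split; first by move=> x /s01 /s12.
  move=> e; apply: n01 => x; split; first exact: s01.
  by move=> /s12 /e.
case: c1 => [e1|e1|e1]; first by case: (nz _ h1 (conj s01 n01)).
  case: c2 => [e2|e2|e2]; first by case: (nz _ h2 s02).
    by apply: n12 => x; rewrite e1 e2.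
  by apply: n2 => h; apply: (Mp_Xn (n:=2) isT); apply/e2/s12/e1.
case: c2 => [e2|e2|e2]; first by case: (nz _ h2 s02).
  by apply: np; apply/e2/s12/e1; exact: Mp_p.
by apply: n12 => x; rewrite e1 e2.
Qed.


Lemma X2split (f : {poly K}) : A f -> f`_0 = 0 -> f = 'X^2 * drop_poly 2 f.
Proof.
move=> hf f0.
have tk : take_poly 2 f = 0.
  apply/polyP => i; rewrite coef_take_poly coef0; case: ifP => // hi.
  by case: i hi => [|[|]] //= _.
by rewrite -{1}(poly_take_drop 2 f) tk add0r mulrC.
Qed.

Lemma A_Xnk b (k : {poly K}) : (2 <= b)%N -> A ('X^b * k).
Proof. by move=> hb; rewrite /A coefXnM; case: b hb => [|[|]]. Qed.

Lemma irr_crit b (k g : {poly K}) : (b == 2%N) || (b == 3%N) -> k`_0 != 0 ->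
  ~~ (P %| k) -> Sd g -> irredIn R (('X^b * k)%:F / g%:F).
Proof.
move=> hb k0 kP hg.
have b2 : (2 <= b)%N by case/orP: hb => /eqP ->.
have b4 : (b < 4)%N by case/orP: hb => /eqP ->.
have Af := A_Xnk b k b2.
have rx : rep (('X^b * k)%:F / g%:F) ('X^b * k) g by [].
have fb : ('X^b * k)`_b = k`_0 by rewrite coefXnM ltnn subnn.
have fn0 : 'X^b * k != 0 by apply: contraNneq k0 => e; rewrite -fb e coef0.
have fP : ~~ (P %| 'X^b * k) by apply: P_ndvdM => //; apply: P_ndvd_Xn.
split.
- exact: R_frac.
- apply/eqP; apply: mulf_neq0; [exact: Fn0 | rewrite invr_eq0; exact: Sd_F].
- move/(unit_rep rx) => [/negP h _]; apply: h; apply/eqP.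
  by rewrite coefXnM; case: b b2 {hb b4 Af rx fb fn0 fP}.
move=> c d /R_rep [fc [gc rc]] /R_rep [fd [gd rd]] ex.
have rcd := rep_mul rc rd; rewrite -ex in rcd.
have e := rep_cross rx rcd.
have [hfc hgc _] := rc; have [hfd hgd _] := rd.
have hgcd := Sd_mul hgc hgd; have [_ gcd0 gcdP] := hgcd.
have ndv : forall h, P %| h -> P %| fc * fd -> False.
  move=> _ _ h; have : P %| 'X^b * k * (gc * gd) by rewrite e dvdp_mulr.
  by move/P_prime; rewrite (negbTE fP) (negbTE gcdP).
have Pfc : ~~ (P %| fc) by apply/negP => h; apply: (ndv _ h); rewrite dvdp_mulr.
have Pfd : ~~ (P %| fd) by apply/negP => h; apply: (ndv _ h); rewrite dvdp_mull.
case: (eqVneq fc`_0 0) => fc0; last by left; apply/(unit_rep rc).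
case: (eqVneq fd`_0 0) => fd0; last by right; apply/(unit_rep rd).
exfalso; move: (congr1 (fun q : {poly K} => q`_b) e).
rewrite (X2split _ hfc fc0) (X2split _ hfd fd0).
set u := drop_poly 2 fc; set v := drop_poly 2 fd.
rewrite (_ : 'X^2 * u * ('X^2 * v) * g = 'X^4 * (u * v * g)); last by ring.
rewrite -mulrA !coefXnM ltnn subnn b4 coef0M => /eqP.
by rewrite mulf_eq0 (negbTE k0) (negbTE gcd0).
Qed.


Lemma irr_Xn b : (b == 2%N) || (b == 3%N) -> irredIn R ('X^b)%:F.
Proof.
move=> hb; have := irr_crit b 1 1 hb _ _ Sd_1.
rewrite mulr1 tofrac1 divr1; apply.
  by rewrite coef1 oner_eq0.
by apply: P_ndvd_small; rewrite ?oner_eq0 ?size_poly1.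
Qed.

Lemma k3_prop (k : {poly K}) : k`_0 != 0 -> ~~ (P %| k) ->
  (k * k * k)`_0 != 0 /\ ~~ (P %| k * k * k).
Proof.
move=> k0 kP; split; first by rewrite !coef0M !mulf_neq0.
by rewrite !P_ndvdM.
Qed.

Lemma not_abs a : irredIn R a -> ~ assocIn R p a -> ~ abs_irredIn R a.
Proof.
move=> ha na [_ habs]; have [Ra a0 anu hfac] := ha.
have [f [g ra]] := (R_rep a).1 Ra; have [hf hg ea] := ra.
have nMp : ~ Mp a.
  case=> z [hz ez]; have [hu|hu] := hfac _ _ R_p hz ez.
    by apply: (unit_notMp hu); exact: Mp_p.
  by apply: na; exists z.
have fP : ~~ (P %| f) by apply/negP => /(Mp_rep ra).
have f0 : f`_0 = 0.
  by have [/(M0_rep ra) //|//|//] := trich Ra.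
have fn0 : f != 0 by apply: contra_not_neq a0 => e; rewrite ea e tofrac0 mul0r.
have [b [k [ef k0 fz]]] := decomp fn0.
have fb : f`_b = k`_0 by rewrite ef coefXnM ltnn subnn.
have b2 : (2 <= b)%N.
  rewrite ltnNge; apply/negP => hb.
  have : (b == 0%N) || (b == 1%N) by lia.
  by case/orP => /eqP eb; rewrite eb in fb; [rewrite f0 in fb | rewrite hf in fb];
    rewrite -fb eqxx in k0.
have kP : ~~ (P %| k) by apply: contraNN fP; rewrite ef; apply: dvdp_mull.
have b4 : (b < 4)%N.
  rewrite ltnNge; apply/negP => hb.
  have hb2 : (2 <= b - 2)%N by lia.
  have ex : a = ('X^2)%:F * (('X^(b - 2) * k)%:F / g%:F).
    by rewrite ea ef mulrA -tofracM mulrA -exprD subnKC.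
  have r2 : rep (('X^(b - 2) * k)%:F / g%:F) ('X^(b - 2) * k) g.
    by split => //; apply: A_Xnk.
  have [h|h] := hfac _ _ (R_Xn (n:=2) isT) (R_frac (A_Xnk _ k hb2) hg) ex.
    exact: (unit_notM0 h (M0_Xn (n:=2) isT isT)).
  have [h0 _] := (unit_rep r2).1 h; move: h0; rewrite coefXnM.
  have -> : (0 < b - 2)%N by lia.
  by rewrite eqxx.
have [k30 k3P] := k3_prop k k0 kP.
have hg3 : Sd (g * g * g) by do 2 apply: Sd_mul => //.
have gF := Sd_F hg.
have : (b == 2%N) || (b == 3%N) by lia.
case/orP => /eqP eb; subst b.
- have [] := habs 3 [:: ('X^3)%:F; ('X^3 * (k * k * k))%:F / (g * g * g)%:F].
  + move=> x; rewrite !inE => /orP [] /eqP ->; first exact: irr_Xn.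
    exact: irr_crit.
  + rewrite big_cons big_cons big_nil mulr1 ea ef.
    rewrite !tofracM !invfM; ring.
  + by [].
- have [k20 k2P] : (k * k)`_0 != 0 /\ ~~ (P %| k * k).
    by split; [rewrite coef0M mulf_neq0 | rewrite P_ndvdM].
  have [] := habs 2 [:: ('X^2)%:F; ('X^2)%:F; ('X^2 * (k * k))%:F / (g * g)%:F].
  + move=> x; rewrite !inE => /orP [/eqP -> | /orP [] /eqP ->]; try exact: irr_Xn.
    by apply: irr_crit => //; apply: Sd_mul.
  + rewrite !big_cons big_nil mulr1 ea ef.
    rewrite !tofracM !invfM; ring.
  + by [].
Qed.


Lemma p_neq0 : p <> 0.
Proof. by apply/eqP; apply: Fn0; exact: P_neq0. Qed.

Lemma p_prime : primeIn R p.
Proof.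
split; [exact: R_p | exact: p_neq0 | by move/unit_notMp; apply; exact: Mp_p |].
by move=> a b ha hb hab; have [_ h] := Mp_prime; apply: h.
Qed.

Lemma notR_X : ~ R 'X%:F.
Proof.
move/R_rep => [f [g [hf hg ex]]].
have : 'X * g = f * 1.
  apply/frac_eq; [by rewrite oner_eq0 | exact: Sd_neq0 |].
  by rewrite tofrac1 divr1.
move/(congr1 (fun q : {poly K} => q`_1)); rewrite mulr1 coefXM /= hf.
by case: hg => _ /eqP.
Qed.

Lemma assoc_prime q : assocIn R p q -> primeIn R q.
Proof.
case=> u [[hu [v [hv uv]]] ->].
have u0 : u != 0 by apply: contra_eq_neq uv => ->; rewrite mul0r eq_sym oner_eq0.
have ev : p * u * v = p by rewrite -mulrA uv mulr1.
split.
- exact: R_mul R_p hu.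
- apply/eqP; apply: mulf_neq0; [apply/eqP; exact: p_neq0 | exact: u0].
- case=> _ [w [hw e]]; apply: (unit_notMp _ Mp_p); split; first exact: R_p.
  by exists (u * w); split; [exact: R_mul | rewrite mulrA].
move=> a b ha hb [c [hc e]].
have : Mp (a * b) by exists (u * c); split; [exact: R_mul | rewrite e mulrA].
case/(proj2 Mp_prime a b ha hb) => [[d [hd ->]]|[d [hd ->]]]; [left|right];
  exists (v * d); (split; [exact: R_mul|]); by rewrite mulrA ev.
Qed.

Lemma prime_assoc q : primeIn R q -> assocIn R p q.
Proof.
move=> hq; have [Rq q0 qnu hqp] := hq.
case: (classic (Mp q)) => [pq|npq]; last first.
  have [mq|//|uq] := trich Rq; last by case: qnu.
  exfalso.
  pose I := fun x => dvdIn R q x.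
  have hI : prime_idealIn R I.
    split.
      split; last first.
        case=> c [hc e]; apply: qnu; split => //; exists c; split => //.
      split.
      + by move=> x [c [hc ->]]; exact: R_mul.
      + by exists 0; split; [exact: R_0 | rewrite mulr0].
      + move=> x y [c [hc ->]] [c' [hc' ->]]; exists (c + c').
        by split; [exact: R_add | rewrite mulrDr].
      + move=> r x hr [c [hc ->]]; exists (r * c).
        by split; [exact: R_mul | rewrite mulrCA].
    exact: hqp.
  have Iq : I q by exists 1; split; [exact: R_1 | rewrite mulr1].
  have [e|e|e] := prime_class hI.
  + by apply: q0; apply/e.
  + have [c [hc e2]] : I ('X^2)%:F by apply/e; apply: M0_Xn.
    have [d [hd e3]] : I ('X^3)%:F by apply/e; apply: M0_Xn.
    have [_ _ _ hf2] := irr_Xn 2 isT.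
    have [//|[_ [ci [hci cci]]]] := hf2 _ _ Rq hc e2.
    apply: notR_X.
    have -> : 'X%:F = ci * d.
      have X20 : ('X^2)%:F != 0 :> KX by apply: Fn0; rewrite -size_poly_eq0 size_polyXn.
      apply: (mulfI X20).
      rewrite -tofracM -exprSr -/(('X^3 : {poly K})) e3 e2 -mulrA [c * _]mulrA.
      by rewrite cci mul1r.
    exact: R_mul.
  + by apply: npq; apply/e.
case: pq => z [hz ez].
  have : dvdIn R q (p * z) by exists 1; split; [exact: R_1 | rewrite mulr1 ez].
  case/(hqp _ _ R_p hz) => [[w [hw ew]]|[w [hw ew]]].
    exists z; split; last exact: ez.
    split; first exact: hz.
    exists w; split; first exact: hw.
    apply: (mulfI (x:=q)); first by apply/eqP.
    by rewrite mulr1 mulrCA -ew mulrC ez.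
  exfalso; apply: (unit_notMp _ Mp_p); split; first exact: R_p.
  exists w; split; first exact: hw.
  apply: (mulfI (x:=q)); first by apply/eqP.
  by rewrite mulr1 mulrCA -ew ez.
Qed.


Lemma size_red (f h : {poly K}) : f != 0 -> size h = size f ->
  (size (f - (lead_coef f / lead_coef h)%:P * h)%R < size f)%N.
Proof.
move=> fn0 sh.
have sf : (0 < size f)%N by rewrite size_poly_gt0.
have hn0 : h != 0 by rewrite -size_poly_gt0 sh.
have lh : lead_coef h != 0 by rewrite lead_coef_eq0.
rewrite -(prednK sf) ltnS; apply/leq_sizeP => j hj.
rewrite coefB coefCM.
case: (ltngtP j (size f).-1) => [|hj2|->]; first by rewrite ltnNge hj.
  have sj : (size f <= j)%N by rewrite -(prednK sf).
  have sj' : (size h <= j)%N by rewrite sh.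
  by rewrite (nth_default _ sj) (nth_default _ sj') mulr0 subr0.
by rewrite -lead_coefE -sh -lead_coefE divfK // subrr.
Qed.

Lemma min_size {Pr : {poly K} -> Prop} : (exists f, Pr f) ->
  exists y, Pr y /\ forall f, Pr f -> (size y <= size f)%N.
Proof.
case=> f0 hf0.
suff : forall n, (exists f, Pr f /\ (size f <= n)%N) ->
  exists y, Pr y /\ forall f, Pr f -> (size y <= size f)%N.
  by apply; exists f0; split; [exact: hf0 | exact: leqnn].
elim=> [|n IH] [f [hf sf]].
  by exists f; split => // g _; apply: leq_trans sf _.
case: (classic (exists f, Pr f /\ (size f <= n)%N)) => [h|h]; first exact: IH.
exists f; split => // g hg; apply: leq_trans sf _; rewrite ltnNge; apply/negP => sg.
by apply: h; exists g.
Qed.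

Lemma noeth : noetherianIn R.
Proof.
move=> I hI; have [hIR hI0 hadd hmul] := hI.
pose J f := A f /\ I f%:F.
have numJ : forall x, I x -> exists f g, rep x f g /\ J f.
  move=> x hx; have [f [g rx]] := (R_rep x).1 (hIR _ hx); have [hf hg ex] := rx.
  exists f, g; split => //; split => //.
  have -> : f%:F = g%:F * x by rewrite ex mulrC (divfK (Sd_F hg)).
  by apply: hmul => //; apply: R_poly; apply: Sd_A.
case: (classic (exists f, J f /\ f != 0)) => [ex|none]; last first.
  exists [::]; split => // x; split.
    move=> hx; exists (fun _ => 0); split => [i|]; first exact: R_0.
    have [f [g [[hf hg ex] hJ]]] := numJ x hx.
    have f0 : f = 0 by apply: NNPP => fn0; apply: none; exists f; split => //; apply/eqP.
    by rewrite big_ord0 ex f0 tofrac0 mul0r.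
  by case=> c [_ ->]; rewrite big_ord0.
have [y [[Jy yn0] ymin]] := min_size ex.
pose m := size y.
have [z [Jz hz]] : exists z, J z /\ ((exists f, J f /\ size f = m.+1) -> size z = m.+1).
  case: (classic (exists f, J f /\ size f = m.+1)) => [[f [hf sf]]|h].
    by exists f; split.
  exists 0; split; last by move=> h'; case: (h h').
  by split; [exact: A_0 | rewrite tofrac0].
have [Ay Iy] := Jy; have [Az Iz] := Jz.
have JC : forall f c h, J f -> J h -> J (f - c%:P * h).
  move=> f c h [Af If] [Ah Ih]; split; first by apply: A_sub => //; apply: A_mul => //; exact: A_C.
  rewrite tofracB tofracM; apply: ideal_sub => //; apply: hmul => //; apply: R_poly; exact: A_C.
have key : forall n (f : {poly K}), (size f <= n)%N -> J f ->
    exists a b, [/\ A a, A b & f = a * y + b * z].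
  elim=> [|n IH] f sf hJf.
    exists 0, 0; split; [exact: A_0 | exact: A_0 |].
    by move: sf; rewrite leqn0 size_poly_eq0 => /eqP ->; rewrite !mul0r addr0.
  case: (eqVneq f 0) => [->|fn0].
    exists 0, 0; split; [exact: A_0 | exact: A_0 | by rewrite !mul0r addr0].
  have sfy : (m <= size f)%N by apply: ymin; split.
  have step : forall h, J h -> size h = size f ->
      exists a b, [/\ A a, A b & f - (lead_coef f / lead_coef h)%:P * h = a * y + b * z].
    move=> h Jh sh; have hs := size_red f h fn0 sh.
    apply: IH; last exact: JC.
    by rewrite -ltnS; apply: leq_trans hs sf.
  case: (eqVneq (size f) m) => [e|e1]; [|case: (eqVneq (size f) m.+1) => [e|e2]].
  - have [a [b [Aa Ab ef]]] := step y Jy (esym e).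
    set c := lead_coef f / lead_coef y in ef *.
    exists (a + c%:P), b; split => //.
      by apply: A_add => //; exact: A_C.
    by rewrite -(subrK (c%:P * y) f) ef; ring.
  - have sz : size z = size f by rewrite e; apply: hz; exists f; split.
    have [a [b [Aa Ab ef]]] := step z Jz sz.
    set c := lead_coef f / lead_coef z in ef *.
    exists a, (b + c%:P); split => //.
      by apply: A_add => //; exact: A_C.
    by rewrite -(subrK (c%:P * z) f) ef; ring.
  - have e : (m.+2 <= size f)%N by lia.
    set d := (size f - m)%N.
    have d1 : d != 1%N by rewrite /d; lia.
    have Jh : J (y * 'X^d).
      split; first by apply: A_mul => //; exact: A_Xn.
      by rewrite tofracM mulrC; apply: hmul => //; exact: R_Xn.
    have sh : size (y * 'X^d) = size f by rewrite size_mulXn // /d /m subnK //; lia.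
    have [a [b [Aa Ab ef]]] := step _ Jh sh.
    set c := lead_coef f / lead_coef (y * 'X^d) in ef *.
    exists (a + c%:P * 'X^d), b; split => //.
      by apply: A_add => //; apply: A_mul; [exact: A_C | exact: A_Xn].
    by rewrite -(subrK (c%:P * (y * 'X^d)) f) ef; ring.
exists [:: y%:F; z%:F]; split.
  by move=> a; rewrite !inE => /orP [] /eqP ->; apply: R_poly.
move=> x; split.
  move=> hx; have [f [g [[hf hg ex'] hJ]]] := numJ x hx.
  have [a [b [Aa Ab ef]]] := key _ f (leqnn _) hJ.
  exists (fun i : 'I_2 => if val i == 0%N then a%:F / g%:F else b%:F / g%:F).
  split.
    by move=> i; case: ifP => _; apply: R_frac.
  rewrite !big_ord_recl big_ord0 /= ex' ef tofracD !tofracM; ring.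
case=> c [hc ->]; rewrite !big_ord_recl big_ord0 /= addr0.
by apply: hadd; apply: hmul.
Qed.


Lemma main_sec :
  let R := @inR K in
  let p := (('X^2 + 1 : {poly K})%:F : {fraction {poly K}}) in
  [/\ primeIn R p,
      irredIn R (('X^2 : {poly K})%:F) /\ irredIn R (('X^3 : {poly K})%:F),
      [/\ is_subring R, noetherianIn R, krull_dim_one R & exactly_two_maximal R],
      (forall q, primeIn R q <-> assocIn R p q) &
      (exists a, irredIn R a /\ ~ assocIn R p a) /\
      (forall a, irredIn R a -> ~ assocIn R p a -> ~ abs_irredIn R a)].
Proof.
move=> R0 p0; split.
- exact: p_prime.
- by split; [apply: (irr_Xn 2) | apply: (irr_Xn 3)].
- split; [exact: R_subring | exact: noeth | exact: krull | exact: two_max].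
- by move=> q; split; [exact: prime_assoc | exact: assoc_prime].
- split.
    exists ('X^2)%:F; split; first exact: (irr_Xn 2).
    case=> u [hu e]; apply: (Mp_Xn (n:=2) isT); exists u; split; [by case: hu | exact: e].
  by move=> a ha na; exact: not_abs.
Qed.

End Main.

Theorem mainTheorem8 (K : fieldType) (hK : forall a : K, a ^+ 2 != -1) :
  let R := @inR K in
  let p := (('X^2 + 1 : {poly K})%:F : {fraction {poly K}}) in
  [/\ primeIn R p,
      irredIn R (('X^2 : {poly K})%:F) /\ irredIn R (('X^3 : {poly K})%:F),
      [/\ is_subring R, noetherianIn R, krull_dim_one R & exactly_two_maximal R],
      (forall q, primeIn R q <-> assocIn R p q) &
      (exists a, irredIn R a /\ ~ assocIn R p a) /\
      (forall a, irredIn R a -> ~ assocIn R p a -> ~ abs_irredIn R a)].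
Proof. exact: (@main_sec K hK). Qed.
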